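(* Let $\alpha=\{a_k\}_{k\ge1}$ be a sequence of positive integers with $a_k\to\infty$, let $j\ge2$, and suppose that for some $\rho>0$, $$L(x;\alpha;j)=\sum_{n=1}^\infty A_L(n)x^n=O\big((1-x)^{-\rho}\big)\qquad\text{as }x\to1^-.$$ Then there is $N_0$ with $\int_0^1 L(x;\alpha;j)F_{N_0}(x;\alpha)|\ln x|^{j-1}\frac{dx}{x}<\infty$, and consequently $\lim_{N\to\infty}E[U_j^N]=I(\alpha;j)<\infty$.
   Context: For $N\ge2$, coupon type $k\in\{1,\dots,N\}$ has probability $a_k/\sum_{i=1}^Na_i$; $U_j^N$ is the number of empty album places of the $j$-th collector when the first collector completes her set (each collector passes duplicates to the next one), with $$E[U_j^N]=\sum_{k=1}^N\int_0^\infty a_k e^{-a_k t}\frac{(a_kt)^{j-1}}{(j-1)!}\prod_{i\ne k,\,1\le i\le N}\big(1-e^{-a_i t}\big)\,dt.$$ $L(x;\alpha;j):=\sum_{k=1}^\infty a_k^j\frac{x^{a_k}}{1-x^{a_k}}$; with $A(m):=\#\{k:a_k=m\}$ this equals $\sum_{m\ge1}m^jA(m)\frac{x^m}{1-x^m}=\sum_{n\ge1}A_L(n)x^n$, $A_L(n):=\sum_{d\mid n}d^jA(d)$. $F_N(x;\alpha):=\prod_{k=1}^N(1-x^{a_k})$, $F(x;\alpha):=\prod_{k=1}^\infty(1-x^{a_k})$, $x_\alpha:=\inf\{x\in[0,1]:\sum_k x^{a_k}=\infty\}$, and $I(\alpha;j):=\frac{1}{(j-1)!}\int_0^{x_\alpha}L(x;\alpha;j)F(x;\alpha)|\ln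 x|^{j-1}\frac{dx}{x}$. *)

(* Defs.v *)
From Stdlib Require Import Reals Lra Lia Classical ClassicalEpsilon Factorial.
Open Scope R_scope.

(* The sequence alpha = (a_1, a_2, ...) is encoded 0-indexed:
   [a k] stands for a_{k+1}.  *)

Fixpoint sumR (f : nat -> R) (n : nat) : R :=
  match n with O => 0 | S m => sumR f m + f m end.
Fixpoint prodR (f : nat -> R) (n : nat) : R :=
  match n with O => 1 | S m => prodR f m * f m end.

Definition choiceR (P : R -> Prop) : R :=
  match excluded_middle_informative (exists x, P x) with
  | left H => proj1_sig (constructive_indefinite_description P H)
  | right _ => 0
  end.

(* limit of a real sequence (the value is only meaningful when it converges) *)
Definition Lim (u : nat -> R) : R := choiceR (Un_cv u).

Definition L_term (a : nat -> nat) (j : nat) (x : R) (k : nat) : R :=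
  INR (a k) ^ j * x ^ (a k) / (1 - x ^ (a k)).
Definition L_partial (a : nat -> nat) (j : nat) (x : R) (n : nat) : R :=
  sumR (L_term a j x) n.
Definition Lser (a : nat -> nat) (j : nat) (x : R) : R := Lim (L_partial a j x).

Definition F_N (a : nat -> nat) (N : nat) (x : R) : R :=
  prodR (fun k => 1 - x ^ (a k)) N.
Definition F_inf (a : nat -> nat) (x : R) : R := Lim (fun N => F_N a N x).

Definition sum_diverges (a : nat -> nat) (x : R) : Prop :=
  ~ (exists M, forall n, sumR (fun k => x ^ (a k)) n <= M).
Definition xalpha_set (a : nat -> nat) (x : R) : Prop :=
  0 <= x <= 1 /\ sum_diverges a x.
Definition is_inf (S : R -> Prop) (m : R) : Prop :=
  (forall y, S y -> m <= y) /\ (forall z, (forall y, S y -> z <= y) -> z <= m).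
Definition x_alpha (a : nat -> nat) : R := choiceR (is_inf (xalpha_set a)).

Definition improper_int (f : R -> R) (a b I : R) : Prop :=
  (forall c d, a < c -> c <= d -> d < b -> inhabited (Riemann_integrable f c d)) /\
  (forall eps, 0 < eps -> exists c0 d0, a < c0 < b /\ a < d0 < b /\
     forall c d (pr : Riemann_integrable f c d),
       a < c <= c0 -> d0 <= d < b -> c <= d -> Rabs (RiemannInt pr - I) < eps).

Definition improper_int_pinf (f : R -> R) (a I : R) : Prop :=
  (forall c d, a < c -> c <= d -> inhabited (Riemann_integrable f c d)) /\
  (forall eps, 0 < eps -> exists c0 d0, a < c0 /\
     forall c d (pr : Riemann_integrable f c d),
       a < c <= c0 -> d0 <= d -> c <= d -> Rabs (RiemannInt pr - I) < eps).

(* integrand of the k-th summand of E[U_j^N] (k, i range over 0..N-1) *)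
Definition EU_integrand (a : nat -> nat) (j N k : nat) (t : R) : R :=
  INR (a k) * exp (- (INR (a k) * t)) * ((INR (a k) * t) ^ (j - 1) / INR (fact (j - 1)))
  * prodR (fun i => if Nat.eqb i k then 1 else 1 - exp (- (INR (a i) * t))) N.

Definition I_integrand (a : nat -> nat) (j : nat) (x : R) : R :=
  / INR (fact (j - 1)) * (Lser a j x * F_inf a x * Rabs (ln x) ^ (j - 1) / x).

(* Main.v *)
Require Import Defs.
From Stdlib Require Import Reals Lra Lia Classical ClassicalEpsilon Factorial.
From Coquelicot Require Import Coquelicot.
Open Scope R_scope.

Definition locint (f : R -> R) a b := forall c d, a < c -> c <= d -> d < b -> ex_RInt f c d.
Definition Imp (f : R -> R) a b I := forall eps, 0 < eps -> exists c0 d0, a < c0 <= d0 /\ d0 < b /\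
  forall c d, a < c <= c0 -> d0 <= d < b -> Rabs (RInt f c d - I) < eps.

Lemma RInt_add3 f c c0 d0 d : ex_RInt f c c0 -> ex_RInt f c0 d0 -> ex_RInt f d0 d ->
  RInt f c d = RInt f c c0 + RInt f c0 d0 + RInt f d0 d.
Proof.
  intros H1 H2 H3.
  rewrite <- (RInt_Chasles f c d0 d); [|apply ex_RInt_Chasles with c0; auto| auto].
  rewrite <- (RInt_Chasles f c c0 d0); auto.
Qed.

Lemma RInt_nonneg_loc f a b c d : locint f a b -> (forall x, a < x < b -> 0 <= f x) ->
  a < c -> c <= d -> d < b -> 0 <= RInt f c d.
Proof.
  intros Hl Hp Hc Hcd Hd. apply RInt_ge_0; auto. intros; apply Hp; lra.
Qed.

Lemma Imp_exists f a b B : a < b -> locint f a b -> (forall x, a < x < b -> 0 <= f x) ->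
  (forall c d, a < c -> c <= d -> d < b -> RInt f c d <= B) -> exists I, Imp f a b I.
Proof.
  intros Hab Hl Hp HB.
  set (E := fun y => exists c d, a < c /\ c <= d /\ d < b /\ y = RInt f c d).
  assert (Hb : bound E). { exists B. intros y (c & d & h1 & h2 & h3 & ->). auto. }
  assert (Hn : exists y, E y). { exists (RInt f ((a+b)/2) ((a+b)/2)).
    exists ((a+b)/2), ((a+b)/2). repeat split; lra. }
  destruct (completeness E Hb Hn) as [m [Hm1 Hm2]].
  exists m. intros eps Heps.
  assert (exists y, E y /\ m - eps < y) as [y [(c0 & d0 & h1 & h2 & h3 & ->) Hy]].
  { apply NNPP; intro Hc. assert (m <= m - eps); [|lra]. apply Hm2. intros y Ey.
    apply Rnot_lt_le. intro Hlt. apply Hc. exists y; auto. }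
  exists c0, d0. repeat split; auto.
  intros c d [hc1 hc2] [hd1 hd2].
  assert (Hin : E (RInt f c d)) by (exists c, d; repeat split; lra).
  specialize (Hm1 _ Hin).
  rewrite (RInt_add3 f c c0 d0 d) in *; try (apply Hl; lra).
  assert (0 <= RInt f c c0) by (apply (RInt_nonneg_loc f a b); auto; lra).
  assert (0 <= RInt f d0 d) by (apply (RInt_nonneg_loc f a b); auto; lra).
  apply Rabs_def1; lra.
Qed.

Lemma Imp_def f a b I : locint f a b -> Imp f a b I -> improper_int f a b I.
Proof.
  intros Hl HI. split.
  - intros c d h1 h2 h3. constructor. apply ex_RInt_Reals_0. apply Hl; auto.
  - intros eps Heps. destruct (HI eps Heps) as (c0 & d0 & h1 & h2 & h3).
    exists c0, d0. split; [lra|]. split; [lra|].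
    intros c d pr hc hd hcd. rewrite <- RInt_Reals. apply h3; lra.
Qed.
Lemma RInt_plusR f g a b : ex_RInt f a b -> ex_RInt g a b ->
  RInt (fun x => f x + g x) a b = RInt f a b + RInt g a b.
Proof. intros. apply (RInt_plus f g a b); auto. Qed.

Lemma RInt_scalR f a b k : ex_RInt f a b -> RInt (fun x => k * f x) a b = k * RInt f a b.
Proof. intros. apply (RInt_scal f a b k); auto. Qed.

Lemma Imp_le_tail f h a b Ih c0 d0 e Jf :
  locint f a b -> locint h a b -> (forall x, a < x < b -> 0 <= f x <= h x) ->
  a < c0 -> c0 <= d0 -> d0 < b ->
  (forall c d, a < c <= c0 -> d0 <= d < b -> Rabs (RInt h c d - Ih) < e) ->
  Imp f a b Jf -> Rabs (Jf - RInt f c0 d0) <= 3 * e.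
Proof.
  intros Hf Hh Hfh h1 h2 h3 Htail HJ.
  apply Rnot_lt_le; intro Hlt.
  assert (He : 0 < e). { assert (Rabs (RInt h c0 d0 - Ih) < e) by (apply Htail; lra).
    pose proof (Rabs_pos (RInt h c0 d0 - Ih)). lra. }
  destruct (HJ e He) as (c1 & d1 & k1 & k2 & k3).
  set (c := Rmin c0 c1). set (d := Rmax d0 d1).
  assert (c <= c0 /\ c <= c1 /\ a < c) as [q1 [q2 q3]] by (unfold c, Rmin; destruct Rle_dec; lra).
  assert (d0 <= d /\ d1 <= d /\ d < b) as [r1 [r2 r3]] by (unfold d, Rmax; destruct Rle_dec; lra).
  specialize (k3 c d ltac:(lra) ltac:(lra)).
  pose proof (Htail c d ltac:(lra) ltac:(lra)).
  pose proof (Htail c0 d0 ltac:(lra) ltac:(lra)).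
  rewrite (RInt_add3 f c c0 d0 d) in k3 by (apply Hf; lra).
  rewrite (RInt_add3 h c c0 d0 d) in H by (apply Hh; lra).
  assert (RInt f c c0 <= RInt h c c0) by (apply RInt_le; try (apply Hf||apply Hh); try lra; intros; apply Hfh; lra).
  assert (RInt f d0 d <= RInt h d0 d) by (apply RInt_le; try (apply Hf||apply Hh); try lra; intros; apply Hfh; lra).
  assert (0 <= RInt f c c0) by (apply RInt_ge_0; try apply Hf; try lra; intros; apply Hfh; lra).
  assert (0 <= RInt f d0 d) by (apply RInt_ge_0; try apply Hf; try lra; intros; apply Hfh; lra).
  revert Hlt k3 H H0. unfold Rabs; repeat destruct Rcase_abs; lra.
Qed.

Lemma Imp_tail_pick h a b Ih e : 0 < e -> Imp h a b Ih ->
  exists c0 d0, a < c0 <= d0 /\ d0 < b /\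
  forall c d, a < c <= c0 -> d0 <= d < b -> Rabs (RInt h c d - Ih) < e.
Proof. intros He H. apply H; auto. Qed.

Lemma Imp_dom (fn : nat -> R -> R) f h a b Jn J Ih N0 :
  locint f a b -> locint h a b -> (forall n, locint (fn n) a b) ->
  (forall x, a < x < b -> 0 <= f x <= h x) ->
  (forall n x, (N0 <= n)%nat -> a < x < b -> 0 <= fn n x <= h x) ->
  Imp h a b Ih -> (forall n, (N0 <= n)%nat -> Imp (fn n) a b (Jn n)) -> Imp f a b J ->
  (forall c d, a < c -> c <= d -> d < b -> Un_cv (fun n => RInt (fn n) c d) (RInt f c d)) ->
  Un_cv Jn J.
Proof.
  intros Hf Hh Hfn Hfh Hfnh HIh HJn HJ Hcv eps Heps.
  set (e := eps / 7).
  destruct (Imp_tail_pick h a b Ih e ltac:(unfold e; lra) HIh) as (c0 & d0 & h1 & h2 & h3).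
  destruct (Hcv c0 d0 ltac:(lra) ltac:(lra) ltac:(lra) e ltac:(unfold e; lra)) as [N1 HN1].
  exists (max N0 N1). intros n Hn.
  pose proof (Imp_le_tail f h a b Ih c0 d0 e J Hf Hh Hfh ltac:(lra) ltac:(lra) ltac:(lra) h3 HJ).
  pose proof (Imp_le_tail (fn n) h a b Ih c0 d0 e (Jn n) (Hfn n) Hh
    ltac:(intros; apply Hfnh; auto; lia) ltac:(lra) ltac:(lra) ltac:(lra) h3 (HJn n ltac:(lia))).
  specialize (HN1 n ltac:(lia)). unfold R_dist in *.
  revert H H0 HN1. unfold e. unfold Rabs; repeat destruct Rcase_abs; lra.
Qed.

Lemma Imp_unique f a b I J : Imp f a b I -> Imp f a b J -> I = J.
Proof.
  intros HI HJ. apply NNPP; intro Hne.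
  assert (He : 0 < Rabs (I - J) / 2) by (apply Rdiv_lt_0_compat; [apply Rabs_pos_lt; lra|lra]).
  destruct (HI _ He) as (c0 & d0 & h1 & h2 & h3).
  destruct (HJ _ He) as (c1 & d1 & k1 & k2 & k3).
  set (c := Rmin c0 c1). set (d := Rmax d0 d1).
  assert (c <= c0 /\ c <= c1 /\ a < c) as [q1 [q2 q3]] by (unfold c, Rmin; destruct Rle_dec; lra).
  assert (d0 <= d /\ d1 <= d /\ d < b) as [r1 [r2 r3]] by (unfold d, Rmax; destruct Rle_dec; lra).
  specialize (h3 c d ltac:(lra) ltac:(lra)). specialize (k3 c d ltac:(lra) ltac:(lra)).
  revert h3 k3. unfold Rabs; repeat destruct Rcase_abs; lra.
Qed.

Lemma Imp_ext f g a b I : (forall x, a < x < b -> f x = g x) -> Imp f a b I -> Imp g a b I.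
Proof.
  intros He HI eps Heps. destruct (HI eps Heps) as (c0 & d0 & h1 & h2 & h3).
  exists c0, d0. repeat split; try lra. intros c d hc hd.
  rewrite <- (RInt_ext f g). apply h3; auto.
  intros x Hx. apply He. revert Hx; unfold Rmin, Rmax; repeat destruct Rle_dec; lra.
Qed.

Lemma locint_ext f g a b : (forall x, a < x < b -> f x = g x) -> locint f a b -> locint g a b.
Proof.
  intros He Hl c d h1 h2 h3. apply (ex_RInt_ext f). 2: apply Hl; auto.
  intros x Hx. apply He. revert Hx; unfold Rmin, Rmax; repeat destruct Rle_dec; lra.
Qed.

Lemma Imp_plus f g a b I J : locint f a b -> locint g a b -> Imp f a b I -> Imp g a b J ->
  Imp (fun x => f x + g x) a b (I + J).
Proof.
  intros Hf Hg HI HJ eps Heps.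
  destruct (HI (eps/2) ltac:(lra)) as (c0 & d0 & h1 & h2 & h3).
  destruct (HJ (eps/2) ltac:(lra)) as (c1 & d1 & k1 & k2 & k3).
  exists (Rmin c0 c1), (Rmax d0 d1).
  assert (Rmin c0 c1 <= c0 /\ Rmin c0 c1 <= c1 /\ a < Rmin c0 c1) as [q1 [q2 q3]] by (unfold Rmin; destruct Rle_dec; lra).
  assert (d0 <= Rmax d0 d1 /\ d1 <= Rmax d0 d1 /\ Rmax d0 d1 < b) as [r1 [r2 r3]] by (unfold Rmax; destruct Rle_dec; lra).
  repeat split; try lra. intros c d hc hd.
  rewrite RInt_plusR by (apply Hf||apply Hg; lra).
  specialize (h3 c d ltac:(lra) ltac:(lra)). specialize (k3 c d ltac:(lra) ltac:(lra)).
  revert h3 k3. unfold Rabs; repeat destruct Rcase_abs; lra.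
Qed.

Lemma Imp_scal f a b I k : locint f a b -> Imp f a b I -> Imp (fun x => k * f x) a b (k * I).
Proof.
  intros Hf HI eps Heps.
  destruct (HI (eps / (Rabs k + 1))) as (c0 & d0 & h1 & h2 & h3).
  { apply Rdiv_lt_0_compat; auto. pose proof (Rabs_pos k); lra. }
  exists c0, d0. repeat split; try lra. intros c d hc hd.
  rewrite RInt_scalR by (apply Hf; lra).
  specialize (h3 c d hc hd).
  replace (k * RInt f c d - k * I) with (k * (RInt f c d - I)) by ring.
  rewrite Rabs_mult.
  pose proof (Rabs_pos k). pose proof (Rabs_pos (RInt f c d - I)).
  apply Rle_lt_trans with (Rabs k * (eps / (Rabs k + 1))).
  apply Rmult_le_compat_l; lra.
  assert (Ht : eps / (Rabs k + 1) * (Rabs k + 1) = eps) by (field; lra).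
  assert (0 < eps / (Rabs k + 1)) by (apply Rdiv_lt_0_compat; lra).
  nra.
Qed.

Lemma locint_plus f g a b : locint f a b -> locint g a b -> locint (fun x => f x + g x) a b.
Proof. intros Hf Hg c d h1 h2 h3. apply (ex_RInt_plus f g); auto. Qed.

Lemma Imp_zero a b : a < b -> Imp (fun _ => 0) a b 0.
Proof.
  intros Hab eps Heps. exists ((a+b)/2), ((a+b)/2). repeat split; try lra.
  intros c d _ _. rewrite RInt_const. unfold scal; simpl; unfold mult; simpl.
  rewrite Rmult_0_r, Rminus_0_r, Rabs_R0; auto.
Qed.

Lemma locint_zero a b : locint (fun _ => 0) a b.
Proof. intros c d _ _ _. apply ex_RInt_const. Qed.

Lemma Imp_sum (fk : nat -> R -> R) Ik a b n : a < b -> (forall k, locint (fk k) a b) ->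
  (forall k, (k < n)%nat -> Imp (fk k) a b (Ik k)) ->
  Imp (fun x => sumR (fun k => fk k x) n) a b (sumR Ik n) /\ locint (fun x => sumR (fun k => fk k x) n) a b.
Proof.
  intros Hab Hl HI. induction n as [|n IH]; simpl.
  - split; [apply Imp_zero; auto| apply locint_zero].
  - destruct IH as [IH1 IH2]; [intros; apply HI; lia|]. split.
    + apply (Imp_plus (fun x => sumR (fun k => fk k x) n) (fk n)); [exact IH2|apply Hl|exact IH1|apply HI; lia].
    + apply (locint_plus (fun x => sumR (fun k => fk k x) n) (fk n)); [exact IH2|apply Hl].
Qed.
Lemma cR_mult (f g : R -> R) (x : R) : continuous f x -> continuous g x -> continuous (fun y => f y * g y) x.
Proof. intros; apply (continuous_mult f g); auto. Qed.
Lemma cR_plus (f g : R -> R) (x : R) : continuous f x -> continuous g x -> continuous (fun y => f y + g y) x.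
Proof. intros; apply (continuous_plus f g); auto. Qed.
Lemma cR_minus (f g : R -> R) (x : R) : continuous f x -> continuous g x -> continuous (fun y => f y - g y) x.
Proof. intros; apply (continuous_minus f g); auto. Qed.
Lemma cR_opp (f : R -> R) (x : R) : continuous f x -> continuous (fun y => - f y) x.
Proof. intros; apply (continuous_opp f); auto. Qed.
Lemma cR_const (c x : R) : continuous (fun _ : R => c) x.
Proof. apply continuous_const. Qed.
Lemma cR_id (x : R) : continuous (fun y : R => y) x.
Proof. apply continuous_id. Qed.
Lemma cR_inv (f : R -> R) (x : R) : continuous f x -> f x <> 0 -> continuous (fun y => / f y) x.
Proof. intros; apply (continuous_Rinv_comp f); auto. Qed.
Lemma cR_div (f g : R -> R) (x : R) : continuous f x -> continuous g x -> g x <> 0 -> continuous (fun y => f y / g y) x.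
Proof. intros; unfold Rdiv; apply cR_mult; auto; apply cR_inv; auto. Qed.
Lemma cR_pow (f : R -> R) n (x : R) : continuous f x -> continuous (fun y => f y ^ n) x.
Proof. intros H; induction n; simpl. apply cR_const. apply cR_mult; auto. Qed.
Lemma cR_exp (f : R -> R) (x : R) : continuous f x -> continuous (fun y => exp (f y)) x.
Proof. intros; apply continuous_exp_comp; auto. Qed.
Lemma cR_abs (f : R -> R) (x : R) : continuous f x -> continuous (fun y => Rabs (f y)) x.
Proof. intros; apply continuous_Rabs_comp; auto. Qed.
Lemma cR_ln (f : R -> R) (x : R) : continuous f x -> 0 < f x -> continuous (fun y => ln (f y)) x.
Proof. intros H1 H2. apply (continuous_comp f ln); auto. apply continuous_ln; auto. Qed.
Lemma cR_sumR (fk : nat -> R -> R) n (x : R) : (forall k, (k < n)%nat -> continuous (fk k) x) ->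
  continuous (fun y => sumR (fun k => fk k y) n) x.
Proof. induction n; intros H; simpl. apply cR_const. apply cR_plus; auto. Qed.
Lemma cR_prodR (fk : nat -> R -> R) n (x : R) : (forall k, (k < n)%nat -> continuous (fk k) x) ->
  continuous (fun y => prodR (fun k => fk k y) n) x.
Proof. induction n; intros H; simpl. apply cR_const. apply cR_mult; auto. Qed.

Lemma cont_to_pt (f : R -> R) (x : R) : continuous f x -> continuity_pt f x.
Proof. intros H; apply continuity_pt_filterlim; exact H. Qed.
Lemma pt_to_cont (f : R -> R) (x : R) : continuity_pt f x -> continuous f x.
Proof. intros H; apply continuity_pt_filterlim; exact H. Qed.

Lemma cont_unif (fn : nat -> R -> R) (f : R -> R) (x r : R) : 0 < r -> (forall n, continuous (fn n) x) ->
  (forall eps, 0 < eps -> exists N, forall y, Rabs (y - x) < r -> Rabs (fn N y - f y) < eps) ->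
  continuous f x.
Proof.
  intros Hr Hc Hu. apply pt_to_cont. intros eps Heps.
  destruct (Hu (eps/3) ltac:(lra)) as [N HN].
  pose proof (cont_to_pt _ _ (Hc N) (eps/3) ltac:(lra)) as [alp [Halp H]].
  exists (Rmin alp r). split. apply Rmin_pos; lra.
  intros y [_ Hy]. unfold R_dist in *. simpl in *. unfold R_dist in *.
  assert (Hy1 : Rabs (y - x) < alp) by (eapply Rlt_le_trans; [apply Hy|apply Rmin_l]).
  assert (Hy2 : Rabs (y - x) < r) by (eapply Rlt_le_trans; [apply Hy|apply Rmin_r]).
  assert (Hx : Rabs (x - x) < r) by (rewrite Rminus_diag, Rabs_R0; lra).
  specialize (H y). unfold D_x, no_cond in H. simpl in H.
  destruct (Req_dec y x) as [->|Hne].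
  - rewrite Rminus_diag, Rabs_R0; lra.
  - specialize (H (conj (conj I (not_eq_sym Hne)) Hy1)). unfold R_dist in H.
    pose proof (HN y Hy2). pose proof (HN x Hx).
    revert H H0 H1. unfold Rabs; repeat destruct Rcase_abs; lra.
Qed.

Lemma locint_cont (f : R -> R) a b : (forall x, a < x < b -> continuous f x) -> locint f a b.
Proof.
  intros H c d h1 h2 h3. apply (ex_RInt_continuous (V:=R_CompleteNormedModule)). intros z Hz. apply H.
  revert Hz; unfold Rmin, Rmax; repeat destruct Rle_dec; lra.
Qed.

Lemma sumR_le f g n : (forall k, (k < n)%nat -> f k <= g k) -> sumR f n <= sumR g n.
Proof. induction n; simpl; intros; [lra|]. assert (f n <= g n) by auto. assert (sumR f n <= sumR g n) by auto. lra. Qed.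
Lemma sumR_nonneg f n : (forall k, (k < n)%nat -> 0 <= f k) -> 0 <= sumR f n.
Proof. induction n; simpl; intros; [lra|]. assert (0 <= f n) by auto. assert (0 <= sumR f n) by auto. lra. Qed.
Lemma sumR_mono f n m : (forall k, 0 <= f k) -> (n <= m)%nat -> sumR f n <= sumR f m.
Proof. intros Hf Hnm; induction Hnm; simpl; try lra. pose proof (Hf m). lra. Qed.
Lemma sumR_ext f g n : (forall k, (k < n)%nat -> f k = g k) -> sumR f n = sumR g n.
Proof. induction n; simpl; intros; auto. rewrite IHn, H; auto. Qed.
Lemma sumR_scal f n c : sumR (fun k => c * f k) n = c * sumR f n.
Proof. induction n; simpl; [ring|]. rewrite IHn; ring. Qed.
Lemma sumR_minus f g n : sumR (fun k => f k - g k) n = sumR f n - sumR g n.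
Proof. induction n; simpl; [ring|]. rewrite IHn; ring. Qed.
Lemma prodR_ext f g n : (forall k, (k < n)%nat -> f k = g k) -> prodR f n = prodR g n.
Proof. induction n; simpl; intros; auto. rewrite IHn, H; auto. Qed.
Lemma prodR_bounds f n : (forall k, 0 <= f k <= 1) -> 0 <= prodR f n <= 1.
Proof. intros H; induction n; simpl; [lra|]. pose proof (H n). nra. Qed.

Lemma Lim_eq u l : Un_cv u l -> Defs.Lim u = l.
Proof.
  intros H. unfold Defs.Lim, choiceR. destruct excluded_middle_informative as [e|n].
  - destruct constructive_indefinite_description as [l' Hl']. simpl. eapply UL_sequence; eauto.
  - exfalso; apply n; eauto.
Qed.

Lemma cv_le_const u l B : Un_cv u l -> (forall n, u n <= B) -> l <= B.
Proof. intros H Hb. eapply Rle_cv_lim; [exact Hb| exact H|]. intros e He; exists O; intros.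
  unfold R_dist; rewrite Rminus_diag, Rabs_R0; auto. Qed.

Lemma cv_shift u l N : Un_cv u l -> Un_cv (fun m => u (N + m)%nat) l.
Proof. intros H e He. destruct (H e He) as [M HM]. exists M. intros n Hn. apply HM. lia. Qed.
Lemma cv_const (c : R) : Un_cv (fun _ => c) c.
Proof. intros e He; exists O; intros; unfold R_dist; rewrite Rminus_diag, Rabs_R0; auto. Qed.

Lemma INR_a_ge1 (a : nat -> nat) k : (0 < a k)%nat -> 1 <= INR (a k).
Proof. intros H. replace 1 with (INR 1) by reflexivity. apply le_INR; lia. Qed.

Lemma powa_bounds (a : nat -> nat) k x : (0 < a k)%nat -> 0 <= x < 1 -> 0 <= x ^ a k < 1.
Proof. intros; apply pow_lt_1_compat; auto. Qed.

Lemma term_props (a : nat -> nat) j k x : (0 < a k)%nat -> 0 <= x < 1 ->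
  0 <= x ^ a k <= L_term a j x k.
Proof.
  intros Ha Hx. pose proof (powa_bounds a k x Ha Hx).
  pose proof (pow_R1_Rle _ j (INR_a_ge1 a k Ha)).
  unfold L_term. split; [lra|].
  unfold Rdiv. rewrite <- (Rmult_1_r (x ^ a k)) at 1.
  replace (INR (a k) ^ j * x ^ a k * / (1 - x ^ a k)) with (x ^ a k * (INR (a k) ^ j * / (1 - x ^ a k))) by ring.
  apply Rmult_le_compat_l; [lra|].
  assert (1 <= / (1 - x ^ a k)). { rewrite <- Rinv_1 at 1. apply Rinv_le_contravar; lra. }
  nra.
Qed.

Lemma term_scale (a : nat -> nat) j k x y : (0 < a k)%nat -> 0 < x <= y -> y < 1 ->
  L_term a j x k <= x / y * L_term a j y k.
Proof.
  intros Ha Hx Hy. unfold L_term.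
  pose proof (powa_bounds a k x Ha ltac:(lra)). pose proof (powa_bounds a k y Ha ltac:(lra)).
  pose proof (pow_le (INR (a k)) j ltac:(pose proof (INR_a_ge1 a k Ha); lra)).
  assert (Hxy : x ^ a k <= x / y * y ^ a k).
  { destruct (a k) as [|n] eqn:E; [lia|]. simpl.
    replace (x / y * (y * y ^ n)) with (x * y ^ n) by (field; lra).
    apply Rmult_le_compat_l; [lra|]. apply pow_incr; lra. }
  assert (Hd : 1 - y ^ a k <= 1 - x ^ a k) by (assert (x ^ a k <= y ^ a k) by (apply pow_incr; lra); lra).
  apply Rle_trans with (INR (a k) ^ j * (x / y * y ^ a k) / (1 - x ^ a k)).
  - unfold Rdiv. apply Rmult_le_compat_r. left; apply Rinv_0_lt_compat; lra.
    apply Rmult_le_compat_l; auto. 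
  - replace (x / y * (INR (a k) ^ j * y ^ a k / (1 - y ^ a k))) with
      (INR (a k) ^ j * (x / y * y ^ a k) / (1 - y ^ a k)) by (field; lra).
    unfold Rdiv. apply Rmult_le_compat_l.
    apply Rmult_le_pos; auto. apply Rmult_le_pos; [apply Rlt_le, Rdiv_lt_0_compat; lra| lra].
    apply Rinv_le_contravar; lra.
Qed.

Lemma term_mono (a : nat -> nat) j k x y : (0 < a k)%nat -> 0 <= x <= y -> y < 1 ->
  L_term a j x k <= L_term a j y k.
Proof.
  intros Ha Hx Hy. unfold L_term.
  pose proof (powa_bounds a k x Ha ltac:(lra)). pose proof (powa_bounds a k y Ha ltac:(lra)).
  pose proof (pow_le (INR (a k)) j ltac:(pose proof (INR_a_ge1 a k Ha); lra)).
  assert (x ^ a k <= y ^ a k) by (apply pow_incr; lra).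
  unfold Rdiv. rewrite !Rmult_assoc. apply Rmult_le_compat_l; auto.
  apply Rmult_le_compat; try lra. left; apply Rinv_0_lt_compat; lra.
  apply Rinv_le_contravar; lra.
Qed.

Lemma Lpart_growing (a : nat -> nat) j x : (forall k, (0 < a k)%nat) -> 0 <= x < 1 ->
  Un_growing (L_partial a j x).
Proof. intros Ha Hx n. unfold L_partial; simpl. pose proof (term_props a j n x (Ha n) Hx). lra. Qed.

Lemma Lpart_nonneg (a : nat -> nat) j x n : (forall k, (0 < a k)%nat) -> 0 <= x < 1 ->
  0 <= L_partial a j x n.
Proof. intros Ha Hx. apply sumR_nonneg. intros k _. pose proof (term_props a j k x (Ha k) Hx). lra. Qed.

Lemma Lpart_mono (a : nat -> nat) j x y n : (forall k, (0 < a k)%nat) -> 0 <= x <= y -> y < 1 ->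
  L_partial a j x n <= L_partial a j y n.
Proof. intros Ha Hx Hy. apply sumR_le. intros k _. apply term_mono; auto. Qed.

Lemma Lcv_exists (a : nat -> nat) j delta :
  (forall k, (0 < a k)%nat) -> 0 < delta ->
  (forall x, 1 - delta < x < 1 -> exists l, Un_cv (L_partial a j x) l) ->
  forall x, 0 <= x < 1 -> Un_cv (L_partial a j x) (Lser a j x).
Proof.
  intros Ha Hd HL x Hx.
  set (y := Rmax x (1 - Rmin delta 1 / 2)).
  assert (Hmin : 0 < Rmin delta 1 <= delta /\ Rmin delta 1 <= 1) by (unfold Rmin; destruct Rle_dec; lra).
  assert (Hy : x <= y /\ 1 - delta < y < 1) by (unfold y, Rmax; destruct Rle_dec; lra).
  destruct (HL y ltac:(lra)) as [ly Hly].
  assert (Hb : has_ub (L_partial a j x)).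
  { exists ly. intros z [n ->]. apply Rle_trans with (L_partial a j y n).
    apply Lpart_mono; auto; lra. apply growing_ineq; auto. apply Lpart_growing; auto; lra. }
  destruct (growing_cv _ (Lpart_growing a j x Ha Hx) Hb) as [l Hl].
  unfold Lser. rewrite (Lim_eq _ l); auto.
Qed.

Definition Lcv_hyp (a : nat -> nat) j := forall x, 0 <= x < 1 -> Un_cv (L_partial a j x) (Lser a j x).

Lemma L_ge_part a j x n : (forall k, (0 < a k)%nat) -> Lcv_hyp a j -> 0 <= x < 1 ->
  L_partial a j x n <= Lser a j x.
Proof. intros Ha Hcv Hx. apply growing_ineq; auto. apply Lpart_growing; auto. Qed.

Lemma L_nonneg a j x : (forall k, (0 < a k)%nat) -> Lcv_hyp a j -> 0 <= x < 1 -> 0 <= Lser a j x.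
Proof. intros Ha Hcv Hx. apply Rle_trans with (L_partial a j x 0); [unfold L_partial; simpl; lra|]. apply L_ge_part; auto. Qed.

Lemma tail_mono a j x y N : (forall k, (0 < a k)%nat) -> Lcv_hyp a j -> 0 <= x <= y -> y < 1 ->
  Lser a j x - L_partial a j x N <= Lser a j y - L_partial a j y N.
Proof.
  intros Ha Hcv Hx Hy.
  assert (Hg : Un_growing (fun n => L_partial a j y n - L_partial a j x n)).
  { intros n. unfold L_partial; simpl. pose proof (term_mono a j n x y (Ha n) Hx Hy). lra. }
  pose proof (growing_ineq _ _ Hg (CV_minus _ _ _ _ (Hcv y ltac:(lra)) (Hcv x ltac:(lra))) N).
  simpl in H. lra.
Qed.

Lemma L_scale a j x y : (forall k, (0 < a k)%nat) -> Lcv_hyp a j -> 0 < x <= y -> y < 1 ->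
  Lser a j x <= x / y * Lser a j y.
Proof.
  intros Ha Hcv Hx Hy.
  eapply Rle_cv_lim; [|apply (Hcv x ltac:(lra))|apply (CV_mult _ _ _ _ (cv_const (x/y)) (Hcv y ltac:(lra)))].
  intros n. simpl. unfold L_partial. rewrite <- sumR_scal. apply sumR_le. intros k _.
  apply term_scale; auto.
Qed.

Lemma onemin_bounds (a : nat -> nat) x k : (0 < a k)%nat -> 0 <= x < 1 -> 0 < 1 - x ^ a k <= 1.
Proof. intros Ha Hx. pose proof (powa_bounds a k x Ha Hx). lra. Qed.

Lemma FN_bounds a N x : (forall k, (0 < a k)%nat) -> 0 <= x < 1 -> 0 <= F_N a N x <= 1.
Proof. intros Ha Hx. apply prodR_bounds. intros k. pose proof (onemin_bounds a x k (Ha k) Hx). lra. Qed.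

Lemma FN_decr a x : (forall k, (0 < a k)%nat) -> 0 <= x < 1 -> Un_decreasing (fun N => F_N a N x).
Proof.
  intros Ha Hx N. unfold F_N; simpl. pose proof (FN_bounds a N x Ha Hx). unfold F_N in H.
  pose proof (onemin_bounds a x N (Ha N) Hx). nra.
Qed.

Lemma F_cv a x : (forall k, (0 < a k)%nat) -> 0 <= x < 1 -> Un_cv (fun N => F_N a N x) (F_inf a x).
Proof.
  intros Ha Hx.
  assert (Hb : has_lb (fun N => F_N a N x)).
  { exists 0. intros z [n ->]. unfold opp_seq. pose proof (FN_bounds a n x Ha Hx). lra. }
  destruct (decreasing_cv _ (FN_decr a x Ha Hx) Hb) as [l Hl].
  unfold F_inf. rewrite (Lim_eq _ l); auto.
Qed.

Lemma F_le_FN a x N : (forall k, (0 < a k)%nat) -> 0 <= x < 1 -> F_inf a x <= F_N a N x.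
Proof. intros Ha Hx. apply decreasing_ineq; [apply FN_decr|apply F_cv]; auto. Qed.

Lemma F_nonneg a x : (forall k, (0 < a k)%nat) -> 0 <= x < 1 -> 0 <= F_inf a x.
Proof.
  intros Ha Hx. eapply Rle_cv_lim; [|apply cv_const|apply F_cv; auto].
  intros n; simpl. apply FN_bounds; auto.
Qed.

Lemma FN_diff_step a j x N m : (forall k, (0 < a k)%nat) -> 0 <= x < 1 ->
  F_N a N x - F_N a (N + m) x <= L_partial a j x (N + m) - L_partial a j x N.
Proof.
  intros Ha Hx. induction m.
  - rewrite Nat.add_0_r. lra.
  - rewrite Nat.add_succ_r. unfold F_N, L_partial in *; simpl.
    pose proof (FN_bounds a (N+m) x Ha Hx). unfold F_N in H.
    pose proof (term_props a j (N+m) x (Ha _) Hx).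
    pose proof (powa_bounds a (N+m) x (Ha _) Hx).
    set (P := prodR (fun k : nat => 1 - x ^ a k) (N + m)) in *.
    assert (P * x ^ a (N+m)%nat <= x ^ a (N+m)%nat) by nra.
    rewrite Rmult_minus_distr_l, Rmult_1_r. lra.
Qed.

Lemma FN_diff a j x N : (forall k, (0 < a k)%nat) -> Lcv_hyp a j -> 0 <= x < 1 ->
  F_N a N x - F_inf a x <= Lser a j x - L_partial a j x N.
Proof.
  intros Ha Hcv Hx.
  eapply Rle_cv_lim.
  - intros m. apply (FN_diff_step a j x N m Ha Hx).
  - apply (CV_minus _ _ _ _ (cv_const _) (cv_shift _ _ N (F_cv a x Ha Hx))).
  - apply (CV_minus _ _ _ _ (cv_shift _ _ N (Hcv x Hx)) (cv_const _)).
Qed.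
Lemma term_cont a j k x : (0 < a k)%nat -> 0 <= x < 1 -> continuous (fun y => L_term a j y k) x.
Proof.
  intros Ha Hx. unfold L_term. apply cR_div.
  apply cR_mult; [apply cR_const| apply cR_pow, cR_id].
  apply cR_minus; [apply cR_const| apply cR_pow, cR_id].
  pose proof (powa_bounds a k x Ha Hx). lra.
Qed.

Lemma Lpart_cont a j N x : (forall k, (0 < a k)%nat) -> 0 <= x < 1 ->
  continuous (fun y => L_partial a j y N) x.
Proof.
  intros Ha Hx. unfold L_partial.
  apply (cR_sumR (fun k y => L_term a j y k)). intros; apply term_cont; auto.
Qed.

Lemma FN_cont a N (x : R) : continuous (fun y => F_N a N y) x.
Proof.
  unfold F_N. apply (cR_prodR (fun k y => 1 - y ^ a k)). intros.
  apply cR_minus; [apply cR_const| apply cR_pow, cR_id].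
Qed.

Lemma small_tail a j d eps : Lcv_hyp a j -> 0 <= d < 1 -> 0 < eps ->
  exists N, Lser a j d - L_partial a j d N < eps.
Proof.
  intros Hcv Hd He. destruct (Hcv d Hd eps He) as [N HN]. exists N.
  specialize (HN N (le_n _)). unfold R_dist in HN. revert HN; unfold Rabs; destruct Rcase_abs; lra.
Qed.

Lemma L_cont a j x : (forall k, (0 < a k)%nat) -> Lcv_hyp a j -> 0 < x < 1 ->
  continuous (fun y => Lser a j y) x.
Proof.
  intros Ha Hcv Hx.
  set (r := Rmin x (1 - x) / 2). set (d := (1 + x) / 2).
  assert (Hr : 0 < r /\ r <= x / 2 /\ r <= (1-x)/2) by (unfold r, Rmin; destruct Rle_dec; lra).
  apply (cont_unif (fun n y => L_partial a j y n) _ x r); try lra.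
  - intros n; apply Lpart_cont; auto; lra.
  - intros eps He. destruct (small_tail a j d eps Hcv ltac:(unfold d; lra) He) as [N HN].
    exists N. intros y Hy.
    assert (Hy' : 0 <= y <= d) by (revert Hy; unfold d, Rabs; destruct Rcase_abs; lra).
    pose proof (tail_mono a j y d N Ha Hcv Hy' ltac:(unfold d; lra)).
    pose proof (L_ge_part a j y N Ha Hcv ltac:(unfold d in *; lra)).
    rewrite Rabs_minus_sym, Rabs_right; lra.
Qed.

Lemma F_cont a j x : (forall k, (0 < a k)%nat) -> Lcv_hyp a j -> 0 < x < 1 ->
  continuous (fun y => F_inf a y) x.
Proof.
  intros Ha Hcv Hx.
  set (r := Rmin x (1 - x) / 2). set (d := (1 + x) / 2).
  assert (Hr : 0 < r /\ r <= x / 2 /\ r <= (1-x)/2) by (unfold r, Rmin; destruct Rle_dec; lra).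
  apply (cont_unif (fun n y => F_N a n y) _ x r); try lra.
  - intros n; apply FN_cont.
  - intros eps He. destruct (small_tail a j d eps Hcv ltac:(unfold d; lra) He) as [N HN].
    exists N. intros y Hy.
    assert (Hy' : 0 <= y <= d) by (revert Hy; unfold d, Rabs; destruct Rcase_abs; lra).
    pose proof (tail_mono a j y d N Ha Hcv Hy' ltac:(unfold d; lra)).
    pose proof (FN_diff a j y N Ha Hcv ltac:(unfold d in *; lra)).
    pose proof (F_le_FN a y N Ha ltac:(unfold d in *; lra)).
    rewrite Rabs_right; lra.
Qed.
Lemma ln_nonpos x : 0 < x <= 1 -> ln x <= 0.
Proof. intros H. rewrite <- ln_1. apply ln_le; lra. Qed.

Lemma log_bound m x : 0 < x <= 1 -> Rabs (ln x) ^ m <= 2 ^ m * INR (fact m) / sqrt x.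
Proof.
  intros Hx. pose proof (ln_nonpos x Hx).
  set (y := - ln x / 2).
  assert (Hy : 0 <= y) by (unfold y; lra).
  assert (Hexp : exp y = / sqrt x).
  { rewrite <- Rpower_sqrt by lra. rewrite <- Rpower_Ropp. unfold Rpower. f_equal. unfold y; field. }
  assert (Ht : y ^ m / INR (fact m) <= exp y).
  { eapply Rle_trans; [|apply (exp_ge_taylor y m Hy)].
    destruct m; [apply Rle_refl|]. simpl.
    assert (0 <= sum_f_R0 (fun k => y ^ k / INR (fact k)) m).
    { apply cond_pos_sum. intros n. apply Rmult_le_pos. apply pow_le; auto. left; apply Rinv_0_lt_compat, lt_0_INR, lt_O_fact. }
    simpl in H0. lra. }
  rewrite Rabs_left1 by lra.
  replace (- ln x) with (2 * y) by (unfold y; field).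
  rewrite Rpow_mult_distr.
  pose proof (lt_0_INR _ (lt_O_fact m)).
  rewrite Hexp in Ht.
  assert (y ^ m <= INR (fact m) * / sqrt x).
  { apply (Rmult_le_reg_r (/ INR (fact m))). apply Rinv_0_lt_compat; auto.
    replace (INR (fact m) * / sqrt x * / INR (fact m)) with (/ sqrt x) by (field; split; [lra|apply Rgt_not_eq, sqrt_lt_R0; lra]).
    exact Ht. }
  unfold Rdiv. rewrite Rmult_assoc. apply Rmult_le_compat_l; auto. apply pow_le; lra.
Qed.

Lemma one_minus_pow_le x n : 0 <= x <= 1 -> 1 - x ^ n <= INR n * (1 - x).
Proof.
  intros Hx. induction n. simpl; lra.
  rewrite S_INR. simpl. assert (x * x ^ n <= x ^ n) by (pose proof (pow_le x n ltac:(lra)); nra).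
  assert (x ^ n <= 1) by (rewrite <- (pow1 n); apply pow_incr; lra).
  assert (x ^ n * (1 - x) <= 1 - x) by (pose proof (pow_le x n ltac:(lra)); nra).
  nra.
Qed.
Lemma FN_nonneg01 a N x : (forall k, (0 < a k)%nat) -> 0 <= x <= 1 -> 0 <= F_N a N x <= 1.
Proof.
  intros Ha Hx. apply prodR_bounds. intros k.
  assert (x ^ a k <= 1) by (rewrite <- (pow1 (a k)); apply pow_incr; lra).
  pose proof (pow_le x (a k) ltac:(lra)). lra.
Qed.

Lemma prodINR_nonneg (a : nat -> nat) N : 0 <= prodR (fun k => INR (a k)) N.
Proof. induction N; simpl; [lra|]. pose proof (pos_INR (a N)). nra. Qed.

Lemma FN_upper a N x : (forall k, (0 < a k)%nat) -> 0 <= x <= 1 ->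
  F_N a N x <= prodR (fun k => INR (a k)) N * (1 - x) ^ N.
Proof.
  intros Ha Hx. induction N. unfold F_N; simpl; lra.
  unfold F_N in *; simpl. pose proof (FN_nonneg01 a N x Ha Hx). unfold F_N in H.
  pose proof (one_minus_pow_le x (a N) Hx).
  assert (x ^ a N <= 1) by (rewrite <- (pow1 (a N)); apply pow_incr; lra).
  replace (prodR (fun k : nat => INR (a k)) N * INR (a N) * ((1 - x) * (1 - x) ^ N)) with
    ((prodR (fun k : nat => INR (a k)) N * (1 - x) ^ N) * (INR (a N) * (1 - x))) by ring.
  apply Rmult_le_compat; lra.
Qed.

Lemma rpow_bound y rho N : 0 < y < 1 -> rho <= INR N -> Rpower y (- rho) * y ^ N <= 1.
Proof.
  intros Hy Hr. rewrite <- (Rpower_pow N y) by lra. rewrite <- Rpower_plus.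
  unfold Rpower. rewrite <- exp_0.
  assert (ln y < 0) by (rewrite <- ln_1; apply ln_increasing; lra).
  assert ((- rho + INR N) * ln y <= 0) by nra.
  destruct (Rle_lt_or_eq_dec _ _ H0) as [h|h]. left; apply exp_increasing; auto. rewrite h; lra.
Qed.

Lemma sqrt_int c d K1 K2 : 0 < c <= d ->
  is_RInt (fun x => K1 * / sqrt x + K2) c d (K1 * (2 * sqrt d - 2 * sqrt c) + K2 * (d - c)).
Proof.
  intros Hcd.
  set (F := fun x => K1 * (2 * sqrt x) + K2 * x).
  replace (K1 * (2 * sqrt d - 2 * sqrt c) + K2 * (d - c)) with (minus (F d) (F c)).
  2:{ unfold minus, plus, opp, F; simpl. ring. }
  apply (is_RInt_derive (V:=R_CompleteNormedModule)); unfold F.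
  - intros x Hx. assert (0 < x) by (revert Hx; unfold Rmin, Rmax; destruct Rle_dec; lra).
    auto_derive. lra. field. apply Rgt_not_eq, sqrt_lt_R0; auto.
  - intros x Hx. assert (0 < x) by (revert Hx; unfold Rmin, Rmax; destruct Rle_dec; lra).
    apply cR_plus; [|apply cR_const]. apply cR_mult; [apply cR_const|].
    apply cR_inv. apply continuous_sqrt_comp, cR_id. apply Rgt_not_eq, sqrt_lt_R0; auto.
Qed.

Definition h0 a j N0 x := Lser a j x * F_N a N0 x * Rabs (ln x) ^ (j - 1) / x.

Lemma h0_nonneg a j N0 x : (forall k, (0 < a k)%nat) -> Lcv_hyp a j -> 0 < x < 1 -> 0 <= h0 a j N0 x.
Proof.
  intros Ha Hcv Hx. unfold h0. pose proof (L_nonneg a j x Ha Hcv ltac:(lra)).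
  pose proof (FN_bounds a N0 x Ha ltac:(lra)). pose proof (pow_le (Rabs (ln x)) (j-1) (Rabs_pos _)).
  unfold Rdiv. apply Rmult_le_pos; [|left; apply Rinv_0_lt_compat; lra].
  apply Rmult_le_pos; auto. apply Rmult_le_pos; lra.
Qed.

Lemma h0_bound a j C rho delta N0 : (forall k, (0 < a k)%nat) -> Lcv_hyp a j -> 0 < delta ->
  (forall x, 1 - delta < x < 1 -> Lser a j x <= C * Rpower (1 - x) (- rho)) -> rho <= INR N0 ->
  exists K1 K2, 0 <= K1 /\ 0 <= K2 /\ forall x, 0 < x < 1 -> h0 a j N0 x <= K1 * / sqrt x + K2.
Proof.
  intros Ha Hcv Hd HB HN.
  set (m := (j - 1)%nat).
  set (p := 1 - Rmin delta 1 / 2).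
  assert (Hp : 1/2 <= p < 1 /\ 1 - delta < p) by (unfold p, Rmin; destruct Rle_dec; lra).
  set (A := prodR (fun k => INR (a k)) N0).
  assert (HA : 0 <= A) by apply prodINR_nonneg.
  assert (Hlp : 0 <= - ln p) by (pose proof (ln_nonpos p ltac:(lra)); lra).
  pose proof (L_nonneg a j p Ha Hcv ltac:(lra)) as HLp.
  pose proof (pos_INR (fact m)).
  exists (Lser a j p / p * (2 ^ m * INR (fact m))), (Rabs C * A * (- ln p) ^ m / p).
  split. { apply Rmult_le_pos. apply Rmult_le_pos; [lra|left; apply Rinv_0_lt_compat; lra].
    apply Rmult_le_pos; [apply pow_le; lra|lra]. }
  split. { apply Rmult_le_pos; [|left; apply Rinv_0_lt_compat; lra].
    apply Rmult_le_pos; [pose proof (Rabs_pos C); nra|apply pow_le; lra]. }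
  intros x Hx.
  pose proof (L_nonneg a j x Ha Hcv ltac:(lra)) as HLx.
  pose proof (FN_bounds a N0 x Ha ltac:(lra)) as HF.
  pose proof (pow_le (Rabs (ln x)) m (Rabs_pos _)) as Hw.
  assert (Hsq : 0 < sqrt x) by (apply sqrt_lt_R0; lra).
  assert (0 <= / sqrt x) by (left; apply Rinv_0_lt_compat; auto).
  assert (HK2 : 0 <= Rabs C * A * (- ln p) ^ m / p).
  { apply Rmult_le_pos; [|left; apply Rinv_0_lt_compat; lra].
    apply Rmult_le_pos; [pose proof (Rabs_pos C); nra|apply pow_le; lra]. }
  unfold h0. fold m.
  replace (Lser a j x * F_N a N0 x * Rabs (ln x) ^ m / x) with
    ((Lser a j x * F_N a N0 x) * (Rabs (ln x) ^ m / x)) by (unfold Rdiv; ring).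
  destruct (Rle_or_lt x p) as [Hxp|Hxp].
  - assert (H1 : Lser a j x * F_N a N0 x <= x / p * Lser a j p).
    { apply Rle_trans with (Lser a j x). nra. apply L_scale; auto; lra. }
    assert (H2 : (Lser a j x * F_N a N0 x) * (Rabs (ln x) ^ m / x) <= (x / p * Lser a j p) * (Rabs (ln x) ^ m / x)).
    { apply Rmult_le_compat_r; auto. unfold Rdiv; apply Rmult_le_pos; auto. left; apply Rinv_0_lt_compat; lra. }
    replace ((x / p * Lser a j p) * (Rabs (ln x) ^ m / x)) with (Lser a j p / p * Rabs (ln x) ^ m) in H2 by (field; lra).
    pose proof (log_bound m x ltac:(lra)).
    assert (Lser a j p / p * Rabs (ln x) ^ m <= Lser a j p / p * (2 ^ m * INR (fact m) / sqrt x)).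
    { apply Rmult_le_compat_l; auto. apply Rmult_le_pos; [lra|left; apply Rinv_0_lt_compat; lra]. }
    replace (Lser a j p / p * (2 ^ m * INR (fact m) / sqrt x)) with (Lser a j p / p * (2 ^ m * INR (fact m)) * / sqrt x) in H3 by (unfold Rdiv; ring). lra.
  - pose proof (HB x ltac:(lra)) as HBx.
    pose proof (FN_upper a N0 x Ha ltac:(lra)) as HFu. fold A in HFu.
    pose proof (rpow_bound (1 - x) rho N0 ltac:(lra) HN) as Hr.
    assert (Hr0 : 0 < Rpower (1 - x) (- rho)) by (unfold Rpower; apply exp_pos).
    assert (0 <= (1 - x) ^ N0) by (apply pow_le; lra).
    assert (H1b : Lser a j x * F_N a N0 x <= Rabs C * A).
    { apply Rle_trans with ((C * Rpower (1 - x) (- rho)) * (A * (1 - x) ^ N0)).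
      apply Rmult_le_compat; lra.
      apply Rle_trans with (Rabs C * Rpower (1 - x) (- rho) * (A * (1 - x) ^ N0)).
      apply Rmult_le_compat_r; [nra|]. apply Rmult_le_compat_r; [lra|apply Rle_abs].
      replace (Rabs C * Rpower (1 - x) (- rho) * (A * (1 - x) ^ N0)) with
        ((Rabs C * A) * (Rpower (1 - x) (- rho) * (1 - x) ^ N0)) by ring.
      pose proof (Rabs_pos C). rewrite <- (Rmult_1_r (Rabs C * A)) at 2.
      apply Rmult_le_compat_l; [nra|lra]. }
    assert (H2b : Rabs (ln x) ^ m / x <= (- ln p) ^ m / p).
    { assert (Rabs (ln x) <= - ln p).
      { rewrite Rabs_left1 by (apply ln_nonpos; lra). pose proof (ln_le p x ltac:(lra) ltac:(lra)). lra. }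
      unfold Rdiv. apply Rmult_le_compat; auto. left; apply Rinv_0_lt_compat; lra.
      apply pow_incr; split; auto; apply Rabs_pos. apply Rinv_le_contravar; lra. }
    assert (0 <= Rabs (ln x) ^ m / x) by (unfold Rdiv; apply Rmult_le_pos; auto; left; apply Rinv_0_lt_compat; lra).
    assert (0 <= Lser a j x * F_N a N0 x) by nra.
    assert ((Lser a j x * F_N a N0 x) * (Rabs (ln x) ^ m / x) <= (Rabs C * A) * ((- ln p) ^ m / p)).
    { apply Rmult_le_compat; auto. }
    assert (0 <= Lser a j p / p * (2 ^ m * INR (fact m)) * / sqrt x).
    { apply Rmult_le_pos; auto. apply Rmult_le_pos. apply Rmult_le_pos; [lra|left; apply Rinv_0_lt_compat; lra].
      apply Rmult_le_pos; [apply pow_le; lra|lra]. }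
    unfold Rdiv in *. lra.
Qed.
Lemma Imp_sqrt_bound f : locint f 0 1 -> (forall x, 0 < x < 1 -> 0 <= f x) ->
  (exists K1 K2, 0 <= K1 /\ 0 <= K2 /\ forall x, 0 < x < 1 -> f x <= K1 * / sqrt x + K2) ->
  exists I, Imp f 0 1 I.
Proof.
  intros Hl Hp (K1 & K2 & HK1 & HK2 & Hb).
  apply (Imp_exists f 0 1 (2 * K1 + K2)); auto; try lra.
  intros c d h1 h2 h3.
  pose proof (sqrt_int c d K1 K2 ltac:(lra)) as Hi.
  apply Rle_trans with (RInt (fun x => K1 * / sqrt x + K2) c d).
  - apply RInt_le; [lra| apply Hl; lra| exists (K1 * (2 * sqrt d - 2 * sqrt c) + K2 * (d - c)); exact Hi|].
    intros x Hx; apply Hb; lra.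
  - rewrite (is_RInt_unique _ _ _ _ Hi).
    assert (sqrt d <= 1) by (rewrite <- sqrt_1; apply sqrt_le_1_alt; lra).
    pose proof (sqrt_pos c). nra.
Qed.

Lemma Imp_bound h a b Ih : locint h a b -> (forall x, a < x < b -> 0 <= h x) -> Imp h a b Ih ->
  forall c d, a < c -> c <= d -> d < b -> RInt h c d <= Ih.
Proof.
  intros Hl Hp HI c d h1 h2 h3. apply Rnot_lt_le; intro Hlt.
  destruct (HI (RInt h c d - Ih) ltac:(lra)) as (c0 & d0 & k1 & k2 & k3).
  set (c' := Rmin c c0). set (d' := Rmax d d0).
  assert (c' <= c0 /\ c' <= c /\ a < c') as [q1 [q2 q3]] by (unfold c', Rmin; destruct Rle_dec; lra).
  assert (d0 <= d' /\ d <= d' /\ d' < b) as [r1 [r2 r3]] by (unfold d', Rmax; destruct Rle_dec; lra).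
  specialize (k3 c' d' ltac:(lra) ltac:(lra)).
  rewrite (RInt_add3 h c' c d d') in k3 by (apply Hl; lra).
  assert (0 <= RInt h c' c) by (apply (RInt_nonneg_loc h a b); auto; lra).
  assert (0 <= RInt h d d') by (apply (RInt_nonneg_loc h a b); auto; lra).
  revert k3; unfold Rabs; destruct Rcase_abs; lra.
Qed.

Lemma Imp_cmp f h a b Ih : a < b -> locint f a b -> locint h a b ->
  (forall x, a < x < b -> 0 <= f x <= h x) -> Imp h a b Ih -> exists I, Imp f a b I.
Proof.
  intros Hab Hf Hh Hfh HI. apply (Imp_exists f a b Ih); auto.
  intros x Hx; apply Hfh; auto.
  intros c d h1 h2 h3. apply Rle_trans with (RInt h c d).
  apply RInt_le; [lra|apply Hf; lra|apply Hh; lra|]. intros; apply Hfh; lra.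
  apply (Imp_bound h a b Ih); auto. intros x Hx; pose proof (Hfh x Hx); lra.
Qed.

Lemma choiceR_spec (P : R -> Prop) : (exists x, P x) -> P (choiceR P).
Proof.
  intros H. unfold choiceR. destruct excluded_middle_informative as [e|n].
  - destruct constructive_indefinite_description as [l' Hl']. exact Hl'.
  - contradiction.
Qed.

Lemma x_alpha_1 a j : (forall k, (0 < a k)%nat) -> Lcv_hyp a j -> x_alpha a = 1.
Proof.
  intros Ha Hcv.
  assert (Hset : forall y, xalpha_set a y <-> y = 1).
  { intros y; split.
    - intros [Hy Hdiv]. destruct Hy as [Hy0 [Hy1|Hy1]]; auto. exfalso. apply Hdiv.
      exists (Lser a j y). intros n. apply Rle_trans with (L_partial a j y n).
      apply sumR_le. intros k _. apply term_props; auto; lra.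
      apply L_ge_part; auto; lra.
    - intros ->. split; [lra|]. intros [M HM].
      assert (Hs : forall n, sumR (fun k => 1 ^ a k) n = INR n).
      { induction n; cbn [sumR]; [reflexivity|]. rewrite IHn, pow1, S_INR; ring. }
      destruct (INR_unbounded M) as [n Hn]. specialize (HM n). rewrite Hs in HM. lra. }
  assert (Hinf : is_inf (xalpha_set a) 1).
  { split. intros y Hy; apply Hset in Hy; lra. intros z Hz. apply Hz, Hset; auto. }
  unfold x_alpha. destruct (choiceR_spec _ (ex_intro _ 1 Hinf)) as [H1 H2].
  apply Rle_antisym. apply H1, Hset; auto. apply H2. intros y Hy. apply (proj1 Hinf); auto.
Qed.
Definition Qk a N k x := prodR (fun i => if Nat.eqb i k then 1 else 1 - x ^ a i) N.
Definition psi a j N k x := EU_integrand a j N k (- ln x) / x.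

Lemma exp_aln (n : nat) x : 0 < x -> exp (- (INR n * - ln x)) = x ^ n.
Proof.
  intros Hx. rewrite <- Rpower_pow by auto. unfold Rpower. f_equal. ring.
Qed.

Lemma psi_eq a j N k x : (1 <= j)%nat -> 0 < x < 1 ->
  psi a j N k x = / INR (fact (j - 1)) * (INR (a k) ^ j * x ^ a k * Rabs (ln x) ^ (j - 1) / x * Qk a N k x).
Proof.
  intros Hj Hx. unfold psi, EU_integrand, Qk.
  rewrite exp_aln by lra.
  rewrite (prodR_ext _ (fun i => if Nat.eqb i k then 1 else 1 - x ^ a i)).
  2:{ intros i _. destruct (Nat.eqb i k); auto. rewrite exp_aln by lra. auto. }
  rewrite Rpow_mult_distr. rewrite (Rabs_left1 (ln x)) by (apply ln_nonpos; lra).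
  replace (INR (a k) ^ j) with (INR (a k) * INR (a k) ^ (j-1)) by (destruct j; [lia|]; simpl; rewrite Nat.sub_0_r; reflexivity).
  field. split; [lra|].
  apply Rgt_not_eq, lt_0_INR, lt_O_fact.
Qed.

Lemma prod_except (g : nat -> R) k N : (k < N)%nat ->
  prodR (fun i => if Nat.eqb i k then 1 else g i) N * g k = prodR g N.
Proof.
  induction N; intros Hk; [lia|]. simpl.
  destruct (Nat.eq_dec k N) as [->|Hne].
  - rewrite Nat.eqb_refl. rewrite (prodR_ext _ g). ring.
    intros i Hi. destruct (Nat.eqb_spec i N); [lia|auto].
  - destruct (Nat.eqb_spec N k); [lia|]. rewrite <- IHN by lia. ring.
Qed.

Definition fN a j N x := / INR (fact (j - 1)) * (L_partial a j x N * F_N a N x * Rabs (ln x) ^ (j - 1) / x).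

Lemma sumR_scal_r f n c : sumR (fun k => f k * c) n = sumR f n * c.
Proof. induction n; simpl; [ring|]. rewrite IHn; ring. Qed.

Lemma psi_sum a j N x : (forall k, (0 < a k)%nat) -> (1 <= j)%nat -> 0 < x < 1 ->
  sumR (fun k => psi a j N k x) N = fN a j N x.
Proof.
  intros Ha Hj Hx. unfold fN, L_partial.
  rewrite (sumR_ext _ (fun k => L_term a j x k * (/ INR (fact (j - 1)) * (F_N a N x * Rabs (ln x) ^ (j - 1) / x)))).
  - rewrite sumR_scal_r. set (w := Rabs (ln x) ^ (j - 1)). unfold Rdiv. ring.
  - intros k Hk. rewrite psi_eq by auto. unfold L_term, F_N.
    rewrite <- (prod_except (fun i => 1 - x ^ a i) k N Hk). fold (Qk a N k x).
    pose proof (powa_bounds a k x (Ha k) ltac:(lra)).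
    field; repeat split; try lra; apply Rgt_not_eq, lt_0_INR, lt_O_fact.
Qed.

Lemma EU_cont a j N k t : continuous (EU_integrand a j N k) t.
Proof.
  unfold EU_integrand.
  apply cR_mult; [apply cR_mult; [apply cR_mult|]|].
  - apply cR_const.
  - apply cR_exp, cR_opp, cR_mult; [apply cR_const|apply cR_id].
  - apply cR_div; [apply cR_pow, cR_mult; [apply cR_const|apply cR_id]|apply cR_const|].
    apply Rgt_not_eq, lt_0_INR, lt_O_fact.
  - apply (cR_prodR (fun i t => if Nat.eqb i k then 1 else 1 - exp (- (INR (a i) * t)))).
    intros i _. destruct (Nat.eqb i k). apply cR_const.
    apply cR_minus; [apply cR_const|]. apply cR_exp, cR_opp, cR_mult; [apply cR_const|apply cR_id].
Qed.

Lemma psi_cont a j N k x : 0 < x -> continuous (psi a j N k) x.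
Proof.
  intros Hx. unfold psi. apply cR_div; [|apply cR_id|lra].
  apply (continuous_comp (fun y => - ln y) (EU_integrand a j N k)).
  apply cR_opp, cR_ln; [apply cR_id|auto]. apply EU_cont.
Qed.

Lemma Qk_bounds a N k x : (forall k, (0 < a k)%nat) -> 0 <= x < 1 -> 0 <= Qk a N k x <= 1.
Proof.
  intros Ha Hx. apply prodR_bounds. intros i. destruct (Nat.eqb i k). lra.
  pose proof (onemin_bounds a x i (Ha i) Hx). lra.
Qed.

Lemma psi_bound a j N k : (forall k, (0 < a k)%nat) -> (1 <= j)%nat ->
  exists K1 K2, 0 <= K1 /\ 0 <= K2 /\ forall x, 0 < x < 1 -> 0 <= psi a j N k x <= K1 * / sqrt x + K2.
Proof.
  intros Ha Hj. set (m := (j - 1)%nat).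
  pose proof (lt_0_INR _ (lt_O_fact m)) as Hf.
  pose proof (pow_le (INR (a k)) j (pos_INR _)) as HA.
  exists (/ INR (fact m) * (INR (a k) ^ j * (2 ^ m * INR (fact m)))), 0.
  split. { apply Rmult_le_pos. left; apply Rinv_0_lt_compat; auto. apply Rmult_le_pos; auto.
    apply Rmult_le_pos; [apply pow_le; lra|lra]. }
  split; [lra|]. intros x Hx. rewrite psi_eq by auto. fold m.
  pose proof (Qk_bounds a N k x Ha ltac:(lra)) as HQ.
  pose proof (powa_bounds a k x (Ha k) ltac:(lra)) as Hp.
  pose proof (pow_le (Rabs (ln x)) m (Rabs_pos _)) as Hw.
  assert (Hxa : x ^ a k / x <= 1).
  { destruct (a k) eqn:E. specialize (Ha k); lia. simpl.
    replace (x * x ^ n / x) with (x ^ n) by (field; lra).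
    rewrite <- (pow1 n); apply pow_incr; lra. }
  assert (Hxa0 : 0 <= x ^ a k / x) by (unfold Rdiv; apply Rmult_le_pos; [lra|left; apply Rinv_0_lt_compat; lra]).
  pose proof (log_bound m x ltac:(lra)) as Hl.
  assert (Hsq : 0 < / sqrt x) by (apply Rinv_0_lt_compat, sqrt_lt_R0; lra).
  replace (INR (a k) ^ j * x ^ a k * Rabs (ln x) ^ m / x * Qk a N k x) with
    (INR (a k) ^ j * ((x ^ a k / x) * Qk a N k x) * Rabs (ln x) ^ m) by (field; lra).
  assert (H1 : 0 <= (x ^ a k / x) * Qk a N k x <= 1) by (split; [nra|nra]).
  assert (H2 : 0 <= INR (a k) ^ j * ((x ^ a k / x) * Qk a N k x) <= INR (a k) ^ j) by (split; nra).
  assert (H3 : INR (a k) ^ j * ((x ^ a k / x) * Qk a N k x) * Rabs (ln x) ^ m <= INR (a k) ^ j * (2 ^ m * INR (fact m) / sqrt x)).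
  { apply Rmult_le_compat; try lra. }
  assert (0 <= INR (a k) ^ j * ((x ^ a k / x) * Qk a N k x) * Rabs (ln x) ^ m) by nra.
  split.
  - apply Rmult_le_pos; [left; apply Rinv_0_lt_compat; auto|auto].
  - replace (/ INR (fact m) * (INR (a k) ^ j * (2 ^ m * INR (fact m))) * / sqrt x + 0) with
      (/ INR (fact m) * (INR (a k) ^ j * (2 ^ m * INR (fact m) / sqrt x))) by (unfold Rdiv; ring).
    apply Rmult_le_compat_l; [left; apply Rinv_0_lt_compat; auto|]. exact H3.
Qed.

Lemma cov (E : R -> R) I : (forall t, continuous E t) ->
  Imp (fun x => E (- ln x) / x) 0 1 I -> improper_int_pinf E 0 I.
Proof.
  intros HE HI. split.
  - intros c d h1 h2. constructor. apply ex_RInt_Reals_0.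
    apply (ex_RInt_continuous (V:=R_CompleteNormedModule)). intros; apply HE.
  - intros eps Heps. destruct (HI eps Heps) as (c0 & d0 & h1 & h2 & h3).
    exists (- ln d0), (- ln c0). split.
    { assert (ln d0 < 0) by (rewrite <- ln_1; apply ln_increasing; lra). lra. }
    intros c d pr hc hd hcd. rewrite <- RInt_Reals.
    set (psi0 := fun x => E (- ln x) / x).
    assert (Hcomp : RInt (fun y => scal (- exp (- y)) (psi0 (exp (- y)))) c d = RInt psi0 (exp (- c)) (exp (- d))).
    { apply (RInt_comp (V:=R_CompleteNormedModule) psi0 (fun t => exp (- t)) (fun t => - exp (- t)) c d).
      - intros x Hx. unfold psi0. apply cR_div; [|apply cR_id|apply Rgt_not_eq, exp_pos].
        apply (continuous_comp (fun y => - ln y) E). apply cR_opp, cR_ln; [apply cR_id|apply exp_pos]. apply HE.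
      - intros x Hx. split. auto_derive; auto. ring.
        apply cR_opp, cR_exp, cR_opp, cR_id. }
    rewrite (RInt_ext _ (fun y => - E y)) in Hcomp.
    2:{ intros y _. unfold psi0, scal; simpl; unfold mult; simpl. rewrite ln_exp.
        rewrite Ropp_involutive. field. apply Rgt_not_eq, exp_pos. }
    assert (Hex : ex_RInt E c d) by (apply (ex_RInt_continuous (V:=R_CompleteNormedModule)); intros; apply HE).
    assert (Hneg : RInt (fun y => - E y) c d = - RInt E c d) by exact (RInt_opp E c d Hex).
    rewrite Hneg in Hcomp.
    assert (Hex2 : ex_RInt psi0 (exp (- d)) (exp (- c))).
    { apply (ex_RInt_continuous (V:=R_CompleteNormedModule)). intros z Hz.
      assert (0 < z).
      { revert Hz; unfold Rmin, Rmax; destruct Rle_dec; pose proof (exp_pos (-c)); pose proof (exp_pos (-d)); lra. }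
      unfold psi0. apply cR_div; [|apply cR_id|lra].
      apply (continuous_comp (fun y => - ln y) E). apply cR_opp, cR_ln; [apply cR_id|auto]. apply HE. }
    rewrite <- (opp_RInt_swap _ _ _ Hex2) in Hcomp.
    unfold opp in Hcomp; simpl in Hcomp.
    assert (RInt E c d = RInt psi0 (exp (- d)) (exp (- c))) by lra.
    rewrite H. apply h3.
    + split. apply exp_pos. rewrite <- (exp_ln c0) by lra. 
      destruct (Rle_lt_or_eq_dec (- d) (ln c0)) as [q|q]; [lra| left; apply exp_increasing; auto| rewrite q; lra].
    + split.
      * rewrite <- (exp_ln d0) by lra.
        destruct (Rle_lt_or_eq_dec (ln d0) (- c)) as [q|q]; [lra| left; apply exp_increasing; auto| rewrite q; lra].
      * rewrite <- exp_0. apply exp_increasing. lra.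
Qed.
Lemma cont_w n (x : R) : 0 < x -> continuous (fun y => Rabs (ln y) ^ n / y) x.
Proof. intros Hx. apply cR_div; [|apply cR_id|lra]. apply cR_pow, cR_abs, cR_ln; [apply cR_id|auto]. Qed.

Lemma fN_cont a j N x : (forall k, (0 < a k)%nat) -> 0 < x < 1 -> continuous (fN a j N) x.
Proof.
  intros Ha Hx. unfold fN. apply cR_mult; [apply cR_const|].
  apply cR_div; [|apply cR_id|lra]. apply cR_mult; [apply cR_mult|].
  apply Lpart_cont; auto; lra. apply FN_cont. apply cR_pow, cR_abs, cR_ln; [apply cR_id|lra].
Qed.

Lemma I_cont a j x : (forall k, (0 < a k)%nat) -> Lcv_hyp a j -> 0 < x < 1 -> continuous (I_integrand a j) x.
Proof.
  intros Ha Hcv Hx. unfold I_integrand. apply cR_mult; [apply cR_const|].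
  apply cR_div; [|apply cR_id|lra]. apply cR_mult; [apply cR_mult|].
  apply L_cont; auto. apply F_cont with j; auto. apply cR_pow, cR_abs, cR_ln; [apply cR_id|lra].
Qed.

Lemma h0_cont a j N0 x : (forall k, (0 < a k)%nat) -> Lcv_hyp a j -> 0 < x < 1 -> continuous (h0 a j N0) x.
Proof.
  intros Ha Hcv Hx. unfold h0.
  apply cR_div; [|apply cR_id|lra]. apply cR_mult; [apply cR_mult|].
  apply L_cont; auto. apply FN_cont. apply cR_pow, cR_abs, cR_ln; [apply cR_id|lra].
Qed.

Lemma FN_antimono a x n N0 : (forall k, (0 < a k)%nat) -> 0 <= x < 1 -> (N0 <= n)%nat ->
  F_N a n x <= F_N a N0 x.
Proof.
  intros Ha Hx Hn. induction Hn; [lra|]. pose proof (FN_decr a x Ha Hx m). simpl in H. lra.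
Qed.

Lemma W_nonneg j x : 0 < x -> 0 <= Rabs (ln x) ^ (j - 1) / x.
Proof. intros Hx. unfold Rdiv; apply Rmult_le_pos; [apply pow_le, Rabs_pos|left; apply Rinv_0_lt_compat; lra]. Qed.

Lemma cst_pos j : 0 < / INR (fact (j - 1)).
Proof. apply Rinv_0_lt_compat, lt_0_INR, lt_O_fact. Qed.

Lemma fN_bounds a j n N0 x : (forall k, (0 < a k)%nat) -> Lcv_hyp a j -> 0 < x < 1 -> (N0 <= n)%nat ->
  0 <= fN a j n x <= / INR (fact (j - 1)) * h0 a j N0 x.
Proof.
  intros Ha Hcv Hx Hn. unfold fN, h0.
  pose proof (cst_pos j). pose proof (W_nonneg j x ltac:(lra)).
  pose proof (Lpart_nonneg a j x n Ha ltac:(lra)). pose proof (L_ge_part a j x n Ha Hcv ltac:(lra)).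
  pose proof (FN_bounds a n x Ha ltac:(lra)). pose proof (FN_antimono a x n N0 Ha ltac:(lra) Hn).
  set (W := Rabs (ln x) ^ (j - 1) / x) in *.
  replace (L_partial a j x n * F_N a n x * Rabs (ln x) ^ (j - 1) / x) with (L_partial a j x n * F_N a n x * W) by (unfold W, Rdiv; ring).
  replace (Lser a j x * F_N a N0 x * Rabs (ln x) ^ (j - 1) / x) with (Lser a j x * F_N a N0 x * W) by (unfold W, Rdiv; ring).
  assert (0 <= L_partial a j x n * F_N a n x) by nra.
  assert (L_partial a j x n * F_N a n x <= Lser a j x * F_N a N0 x) by (apply Rmult_le_compat; lra).
  split. apply Rmult_le_pos; [lra|]. apply Rmult_le_pos; lra.
  apply Rmult_le_compat_l; [lra|]. apply Rmult_le_compat_r; lra.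
Qed.

Lemma I_bounds a j N0 x : (forall k, (0 < a k)%nat) -> Lcv_hyp a j -> 0 < x < 1 ->
  0 <= I_integrand a j x <= / INR (fact (j - 1)) * h0 a j N0 x.
Proof.
  intros Ha Hcv Hx. unfold I_integrand, h0.
  pose proof (cst_pos j). pose proof (W_nonneg j x ltac:(lra)).
  pose proof (L_nonneg a j x Ha Hcv ltac:(lra)).
  pose proof (F_nonneg a x Ha ltac:(lra)). pose proof (F_le_FN a x N0 Ha ltac:(lra)).
  set (W := Rabs (ln x) ^ (j - 1) / x) in *.
  replace (Lser a j x * F_inf a x * Rabs (ln x) ^ (j - 1) / x) with (Lser a j x * F_inf a x * W) by (unfold W, Rdiv; ring).
  replace (Lser a j x * F_N a N0 x * Rabs (ln x) ^ (j - 1) / x) with (Lser a j x * F_N a N0 x * W) by (unfold W, Rdiv; ring).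
  assert (0 <= Lser a j x * F_inf a x) by nra.
  assert (Lser a j x * F_inf a x <= Lser a j x * F_N a N0 x) by (apply Rmult_le_compat_l; lra).
  split. apply Rmult_le_pos; [lra|]. apply Rmult_le_pos; lra.
  apply Rmult_le_compat_l; [lra|]. apply Rmult_le_compat_r; lra.
Qed.

Lemma pt_diff a j n c d x : (forall k, (0 < a k)%nat) -> Lcv_hyp a j -> 0 < c <= x -> x <= d -> d < 1 ->
  Rabs (fN a j n x - I_integrand a j x) <=
    / INR (fact (j - 1)) * (Rabs (ln c) ^ (j - 1) / c) * (1 + Lser a j d) * (Lser a j d - L_partial a j d n).
Proof.
  intros Ha Hcv Hc Hx Hd. unfold fN, I_integrand.
  pose proof (cst_pos j) as Hcst.
  set (W := Rabs (ln x) ^ (j - 1) / x).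
  assert (HW : 0 <= W <= Rabs (ln c) ^ (j - 1) / c).
  { split. apply W_nonneg; lra. unfold W, Rdiv. apply Rmult_le_compat.
    apply pow_le, Rabs_pos. left; apply Rinv_0_lt_compat; lra.
    apply pow_incr. split. apply Rabs_pos.
    rewrite !Rabs_left1 by (apply ln_nonpos; lra). pose proof (ln_le c x ltac:(lra) ltac:(lra)). lra.
    apply Rinv_le_contravar; lra. }
  replace (/ INR (fact (j - 1)) * (L_partial a j x n * F_N a n x * Rabs (ln x) ^ (j - 1) / x) -
           / INR (fact (j - 1)) * (Lser a j x * F_inf a x * Rabs (ln x) ^ (j - 1) / x))
    with (/ INR (fact (j - 1)) * W * (L_partial a j x n * F_N a n x - Lser a j x * F_inf a x)) by (unfold W, Rdiv; ring).
  rewrite Rabs_mult, Rabs_mult, (Rabs_right (/ _)) by lra. rewrite (Rabs_right W) by lra.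
  pose proof (Lpart_nonneg a j x n Ha ltac:(lra)). pose proof (L_ge_part a j x n Ha Hcv ltac:(lra)).
  pose proof (FN_bounds a n x Ha ltac:(lra)). pose proof (F_nonneg a x Ha ltac:(lra)).
  pose proof (F_le_FN a x n Ha ltac:(lra)). pose proof (FN_diff a j x n Ha Hcv ltac:(lra)).
  pose proof (tail_mono a j x d n Ha Hcv ltac:(lra) Hd).
  assert (HLxd : Lser a j x <= Lser a j d).
  { apply Rle_trans with (x / d * Lser a j d). apply L_scale; auto; lra.
    pose proof (L_nonneg a j d Ha Hcv ltac:(lra)).
    assert (x / d <= 1) by (apply (Rmult_le_reg_r d); [lra|]; unfold Rdiv; rewrite Rmult_assoc, Rinv_l; lra).
    assert (0 <= x / d) by (unfold Rdiv; apply Rmult_le_pos; [lra|left; apply Rinv_0_lt_compat; lra]).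
    nra. }
  set (T := Lser a j d - L_partial a j d n) in *.
  assert (HT : 0 <= T) by (unfold T; pose proof (L_ge_part a j d n Ha Hcv ltac:(lra)); lra).
  assert (Hdiff : Rabs (L_partial a j x n * F_N a n x - Lser a j x * F_inf a x) <= (1 + Lser a j d) * T).
  { replace (L_partial a j x n * F_N a n x - Lser a j x * F_inf a x) with
      (- ((Lser a j x - L_partial a j x n) * F_N a n x) + Lser a j x * (F_N a n x - F_inf a x)) by ring.
    pose proof (L_nonneg a j x Ha Hcv ltac:(lra)).
    eapply Rle_trans; [apply Rabs_triang|]. rewrite Rabs_Ropp.
    rewrite (Rabs_right ((Lser a j x - L_partial a j x n) * F_N a n x)) by nra.
    rewrite (Rabs_right (Lser a j x * (F_N a n x - F_inf a x))) by nra.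
    assert ((Lser a j x - L_partial a j x n) * F_N a n x <= T) by nra.
    assert (Lser a j x * (F_N a n x - F_inf a x) <= Lser a j d * T) by nra.
    lra. }
  replace (/ INR (fact (j - 1)) * (Rabs (ln c) ^ (j - 1) / c) * (1 + Lser a j d) * T) with
    ((/ INR (fact (j - 1)) * (Rabs (ln c) ^ (j - 1) / c)) * ((1 + Lser a j d) * T)) by ring.
  apply Rmult_le_compat; try lra. apply Rmult_le_pos; lra. apply Rabs_pos.
  apply Rmult_le_compat_l; lra.
Qed.

Lemma compact_cv a j c d : (forall k, (0 < a k)%nat) -> Lcv_hyp a j -> 0 < c -> c <= d -> d < 1 ->
  Un_cv (fun n => RInt (fN a j n) c d) (RInt (I_integrand a j) c d).
Proof.
  intros Ha Hcv Hc Hcd Hd eps Heps.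
  set (K := (d - c) * (/ INR (fact (j - 1)) * (Rabs (ln c) ^ (j - 1) / c) * (1 + Lser a j d))).
  assert (HK : 0 <= K).
  { unfold K. pose proof (cst_pos j). pose proof (W_nonneg j c Hc). pose proof (L_nonneg a j d Ha Hcv ltac:(lra)).
    apply Rmult_le_pos; [lra|]. apply Rmult_le_pos; [apply Rmult_le_pos|]; lra. }
  destruct (small_tail a j d (eps / (K + 1)) Hcv ltac:(lra) ltac:(apply Rdiv_lt_0_compat; lra)) as [N HN].
  exists N. intros n Hn. unfold R_dist.
  assert (Hexf : ex_RInt (fN a j n) c d) by (apply locint_cont with 0 1; [intros; apply fN_cont; auto|lra..]).
  assert (Hexg : ex_RInt (I_integrand a j) c d) by (apply locint_cont with 0 1; [intros; apply I_cont; auto|lra..]).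
  assert (Heq : RInt (fN a j n) c d - RInt (I_integrand a j) c d = RInt (fun x => fN a j n x + (-1) * I_integrand a j x) c d).
  { rewrite RInt_plusR; auto. rewrite RInt_scalR; auto. ring. apply (ex_RInt_scal (I_integrand a j) c d (-1)); auto. }
  rewrite Heq.
  pose proof (L_ge_part a j d n Ha Hcv ltac:(lra)).
  pose proof (Lpart_growing a j d Ha ltac:(lra)).
  assert (Htail : Lser a j d - L_partial a j d n <= Lser a j d - L_partial a j d N).
  { assert (L_partial a j d N <= L_partial a j d n); [|lra].
    unfold L_partial. apply sumR_mono; auto. intros k. pose proof (term_props a j k d (Ha k) ltac:(lra)); lra. }
  eapply Rle_lt_trans.
  apply (abs_RInt_le_const _ c d (/ INR (fact (j - 1)) * (Rabs (ln c) ^ (j - 1) / c) * (1 + Lser a j d) * (Lser a j d - L_partial a j d n))); auto.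
  apply (ex_RInt_plus (fN a j n) (fun x => (-1) * I_integrand a j x)); auto.
  apply (ex_RInt_scal (I_integrand a j) c d (-1)); auto.
  intros t Ht. replace (fN a j n t + -1 * I_integrand a j t) with (fN a j n t - I_integrand a j t) by ring.
  apply pt_diff; auto; lra.
  replace ((d - c) * (/ INR (fact (j - 1)) * (Rabs (ln c) ^ (j - 1) / c) * (1 + Lser a j d) * (Lser a j d - L_partial a j d n)))
    with (K * (Lser a j d - L_partial a j d n)) by (unfold K; ring).
  assert (Lser a j d - L_partial a j d N < eps / (K + 1)) by auto.
  assert (K * (Lser a j d - L_partial a j d n) <= K * (eps / (K + 1))) by (apply Rmult_le_compat_l; lra).
  assert (K * (eps / (K + 1)) < eps).
  { assert (Ht : eps / (K + 1) * (K + 1) = eps) by (field; lra).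
    assert (0 < eps / (K + 1)) by (apply Rdiv_lt_0_compat; lra). nra. }
  lra.
Qed.
Theorem corollary1 (a : nat -> nat) (j : nat)
  (Hpos : forall k, (0 < a k)%nat)
  (Hinf : forall M : nat, exists K, forall k, (K <= k)%nat -> (M <= a k)%nat)
  (Hj : (2 <= j)%nat)
  (HO : exists rho C delta, 0 < rho /\ 0 < delta /\
          forall x, 1 - delta < x < 1 ->
            exists l, Un_cv (L_partial a j x) l /\
                      Rabs l <= C * Rpower (1 - x) (- rho)) :
  (exists N0 J0, improper_int
      (fun x => Lser a j x * F_N a N0 x * Rabs (ln x) ^ (j - 1) / x) 0 1 J0)
  /\
  (exists I, improper_int (I_integrand a j) 0 (x_alpha a) I /\
     exists e : nat -> nat -> R,
       (forall N k, (2 <= N)%nat -> (k < N)%nat ->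
          improper_int_pinf (EU_integrand a j N k) 0 (e N k)) /\
       Un_cv (fun N => sumR (e N) N) I).
Proof.
  destruct HO as (rho & C & delta & Hrho & Hdelta & HL).
  assert (Hcv : Lcv_hyp a j).
  { assert (Hex : forall x, 1 - delta < x < 1 -> exists l, Un_cv (L_partial a j x) l).
    { intros x Hx. destruct (HL x Hx) as [l [Hl _]]. eauto. }
    exact (Lcv_exists a j delta Hpos Hdelta Hex). }
  set (delta' := Rmin delta (1/2)).
  assert (Hd' : 0 < delta' <= delta /\ delta' <= 1/2) by (unfold delta', Rmin; destruct Rle_dec; lra).
  assert (HB : forall x, 1 - delta' < x < 1 -> Lser a j x <= C * Rpower (1 - x) (- rho)).
  { intros x Hx. destruct (HL x ltac:(lra)) as [l [Hl Hb]].
    rewrite (UL_sequence _ _ _ (Hcv x ltac:(lra)) Hl). eapply Rle_trans; [apply Rle_abs|exact Hb]. }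
  destruct (INR_unbounded rho) as [N0 HN0].
  assert (Hl0 : locint (h0 a j N0) 0 1) by (apply locint_cont; intros; apply h0_cont; auto).
  destruct (Imp_sqrt_bound (h0 a j N0) Hl0
     ltac:(intros; apply h0_nonneg; auto)
     ltac:(apply (h0_bound a j C rho delta' N0); auto; lra)) as [J0 HJ0].
  split.
  { exists N0, J0. apply (Imp_def (h0 a j N0)); auto. }
  set (cst := / INR (fact (j - 1))).
  assert (Hh : Imp (fun x => cst * h0 a j N0 x) 0 1 (cst * J0)) by (apply Imp_scal; auto).
  assert (Hlh : locint (fun x => cst * h0 a j N0 x) 0 1).
  { apply locint_cont; intros. apply cR_mult; [apply cR_const|apply h0_cont; auto]. }
  assert (HlI : locint (I_integrand a j) 0 1) by (apply locint_cont; intros; apply I_cont; auto).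
  destruct (Imp_cmp (I_integrand a j) (fun x => cst * h0 a j N0 x) 0 1 (cst * J0) ltac:(lra) HlI Hlh
     ltac:(intros; apply I_bounds; auto) Hh) as [J HJ].
  exists J. split.
  { rewrite (x_alpha_1 a j Hpos Hcv). apply Imp_def; auto. }
  assert (Hlpsi : forall N k, locint (psi a j N k) 0 1) by (intros; apply locint_cont; intros; apply psi_cont; lra).
  assert (Hpsi : forall N k, exists I, Imp (psi a j N k) 0 1 I).
  { intros N k. destruct (psi_bound a j N k Hpos ltac:(lia)) as (K1 & K2 & h1 & h2 & h3).
    apply Imp_sqrt_bound; auto. intros; apply h3; auto. exists K1, K2; repeat split; auto. intros; apply h3; auto. }
  set (e := fun N k => choiceR (Imp (psi a j N k) 0 1)).
  assert (He : forall N k, Imp (psi a j N k) 0 1 (e N k)) by (intros; apply choiceR_spec; auto).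
  exists e. split.
  { intros N k _ _. apply cov. apply EU_cont. apply (Imp_ext (psi a j N k)); auto. }
  assert (HfN : forall n, Imp (fN a j n) 0 1 (sumR (e n) n)).
  { intros n. destruct (Imp_sum (psi a j n) (e n) 0 1 n ltac:(lra) (Hlpsi n) ltac:(intros; apply He)) as [H1 _].
    apply (Imp_ext (fun x => sumR (fun k => psi a j n k x) n)); auto.
    intros x Hx. apply psi_sum; auto; lia. }
  apply (Imp_dom (fun n => fN a j n) (I_integrand a j) (fun x => cst * h0 a j N0 x) 0 1
           (fun n => sumR (e n) n) J (cst * J0) N0); auto.
  - intros n. apply locint_cont; intros; apply fN_cont; auto.
  - intros x Hx. apply I_bounds; auto.
  - intros n x Hn Hx. apply fN_bounds; auto.
  - intros c d h1 h2 h3. apply compact_cv; auto.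
Qed.
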